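(* Under the setting described in the context, there is a constant $c>0$, depending only on $\psi$, $\mu$ and $d$, such that for all $0<h\le 1$, $$\left\|\left(\int_{\Omega}\psi_h(\cdot-t)\,d\mu(t)\right)^{-1}\right\|_{L^\infty(\Omega)}\le c,$$ equivalently $\int_\Omega \psi_h(x-t)\,d\mu(t)\ge 1/c$ for all $x\in\Omega$.
   Context: Let $d\ge 1$ and let $\Omega\subset\mathbb{R}^d$ be a compact convex domain with Lipschitz boundary. Let $\mu$ be a probability measure on $\Omega$ such that: (1) there is a constant $C_1>0$, depending only on $\mu$ and $d$, with $\mu(\Omega\cap B(x,\alpha))\ge C_1\, m(B(x,\alpha))$ for all $x\in\Omega$ and $0<\alpha\le 1$, where $B(x,\alpha)$ is the Euclidean ball of radius $\alpha$ centered at $x$ and $m$ is Lebesgue measure; (2) $\mu$ extends to a finite positive measure $\mu^*$ on $\mathbb{R}^d$ whose Fourier transform belongs to $L^1(\mathbb{R}^d)$. Let $\psi\in C(\mathbb{R}^d)$ be nonnegative with $\int_{\mathbb{R}^d}\psi=1$, $\int_{\mathbb{R}^d}|x|\psi(x)\,dx<\infty$, and $\psi(x)\ge C_\psi>0$ for all $|x|\le 1$. For $h>0$ set $\psi_h(x)=h^{-d}\psi(x/h)$. *)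

(* Defs.v *)
From HB Require Import structures.
From mathcomp Require Import all_boot all_order all_algebra.
From mathcomp Require Import all_classical all_reals all_analysis.
Set Implicit Arguments. Unset Strict Implicit. Unset Printing Implicit Defensive.
Import Order.TTheory GRing.Theory Num.Theory.
Import numFieldNormedType.Exports.
Local Open Scope classical_set_scope.
Local Open Scope ring_scope.

Section Defs.
Variables (R : realType) (d : nat).

Definition Rd := g_sigma_algebraType (@open 'rV[R]_d).

Definition dotv (x y : 'rV[R]_d) : R := \sum_i x 0 i * y 0 i.
Definition enorm (x : 'rV[R]_d) : R := Num.sqrt (dotv x x).
Definition eball (x : 'rV[R]_d) (a : R) : set 'rV[R]_d :=
  [set y | enorm (y - x) < a].

Definition box (a b : 'rV[R]_d) : set 'rV[R]_d :=
  [set y | forall i, a 0 i <= y 0 i <= b 0 i].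

(* leb is the d-dimensional Lebesgue measure on the Borel sets of R^d:
   it gives every box its volume (this determines it uniquely). *)
Definition is_lebesgue (leb : {measure set Rd -> \bar R}) : Prop :=
  forall a b : 'rV[R]_d, (forall i, a 0 i <= b 0 i) ->
    leb (box a b) = (\prod_i (b 0 i - a 0 i))%:E.

Definition proj (e v : 'rV[R]_d) : 'rV[R]_d := v - dotv v e *: e.

Definition lipschitz_boundary (A : set 'rV[R]_d) : Prop :=
  forall x, closure A x -> ~ interior A x ->
  exists (e : 'rV[R]_d) (r L : R) (g : 'rV[R]_d -> R),
    [/\ enorm e = 1, 0 < r,
        (forall u v, `|g u - g v| <= L * enorm (u - v)) &
        forall y, enorm (y - x) < r ->
          (A y <-> g (proj e (y - x)) <= dotv (y - x) e)].

(* modulus of the Fourier transform of a finite measure: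
   |hat nu (xi)| = | int e^{-i xi.x} dnu(x) | *)
Definition fourier_abs (nu : {measure set Rd -> \bar R}) (xi : 'rV[R]_d) : R :=
  Num.sqrt (Rintegral nu setT (fun x : Rd => cos (dotv xi x)) ^+ 2
          + Rintegral nu setT (fun x : Rd => sin (dotv xi x)) ^+ 2).

End Defs.

(* Main.v *)
Require Import Defs.
From HB Require Import structures.
From mathcomp Require Import all_boot all_order all_algebra.
From mathcomp Require Import all_classical all_reals all_analysis.
From mathcomp Require Import ring lra.
Import Order.TTheory GRing.Theory Num.Theory.
Import numFieldNormedType.Exports.
Local Open Scope classical_set_scope.
Local Open Scope ring_scope.

Section H.
Variables (R : realType) (d : nat).

Lemma sum_cont (T : topologicalType) (I : Type) (r : seq I) (F : I -> T -> R) :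
  (forall i, continuous (F i)) -> continuous (fun y => \sum_(i <- r) F i y).
Proof.
move=> Fc; elim: r => [|i r IH].
  under eq_fun do rewrite big_nil; exact: cst_continuous.
under eq_fun do rewrite big_cons.
by move=> y; apply: continuousD; [exact: Fc|exact: IH].
Qed.

Lemma enorm_cont (x : 'rV[R]_d) : continuous (fun y : 'rV[R]_d => enorm (y - x)).
Proof.
have -> : (fun y : 'rV[R]_d => enorm (y - x)) =
  Num.sqrt \o (fun y => \sum_i (y - x) 0 i * (y - x) 0 i) by [].
move=> y; apply: continuous_comp; last exact: sqrt_continuous.
move: y; have := (@sum_cont 'rV[R]_d _ (index_enum 'I_d) (fun i z => (z - x) 0 i * (z - x) 0 i)).
move=> H; apply: H => i z.
have c : continuous (fun z : 'rV[R]_d => (z - x) 0 i).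
  have -> : (fun z : 'rV[R]_d => (z - x) 0 i) = (fun M : 'rV[R]_d => M 0 i) \o (fun z => z - x) by [].
  move=> w; apply: continuous_comp; last exact: coord_continuous.
  by apply: continuousB; [exact: cvg_id|exact: cst_continuous].
exact: (@continuousM _ _ (fun z : 'rV[R]_d => (z - x) 0 i) (fun z : 'rV[R]_d => (z - x) 0 i) z (c z) (c z)).
Qed.

Lemma eball_open (x : 'rV[R]_d) a : open (eball x a).
Proof.
rewrite /eball.
have -> : [set y | enorm (y - x) < a] = (fun y => enorm (y - x)) @^-1` [set z | z < a] by [].
apply: open_comp; last exact: open_lt.
by move=> y _; exact: enorm_cont.
Qed.

Lemma box_closed (a b : 'rV[R]_d) : closed (box a b).
Proof.
have -> : box a b = \bigcap_i ((fun y : 'rV[R]_d => y 0 i) @^-1` [set z | a 0 i <= z]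
    `&` (fun y : 'rV[R]_d => y 0 i) @^-1` [set z | z <= b 0 i]).
  apply/seteqP; split => y /=.
    by move=> H i _; have /andP[] := H i.
  by move=> H i; have [] := H i I => /= -> ->.
apply: closed_bigI => i _; apply: closedI; apply: closed_comp.
- by move=> y _; exact: coord_continuous.
- exact: closed_ge.
- by move=> y _; exact: coord_continuous.
- exact: closed_le.
Qed.

Lemma open_meas (A : set (Rd R d)) : open A -> measurable A.
Proof. by move=> oA; apply: sub_sigma_algebra. Qed.

Lemma closed_meas (A : set (Rd R d)) : @closed 'rV[R]_d A -> measurable A.
Proof.
move=> cA; rewrite -(setCK A); apply: measurableC; apply: open_meas.
exact: closed_openC.
Qed.


Lemma enormZ (c : R) (v : 'rV[R]_d) : enorm (c *: v) = `|c| * enorm v.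
Proof.
rewrite /enorm /dotv -sqrtr_sqr -sqrtrM ?sqr_ge0 //; congr Num.sqrt.
rewrite mulr_sumr; apply: eq_bigr => i _; rewrite !mxE; ring.
Qed.

Lemma enormN (v : 'rV[R]_d) : enorm (- v) = enorm v.
Proof. by rewrite -scaleN1r enormZ normrN normr1 mul1r. Qed.

End H.

Lemma ge0_le_integral_nm dd (T : measurableType dd) (R : realType)
  (mu : {measure set T -> \bar R}) (D : set T) (f g : T -> \bar R) :
  (forall x, D x -> (0 <= f x)%E) -> (forall x, D x -> (f x <= g x)%E) ->
  (\int[mu]_(x in D) f x <= \int[mu]_(x in D) g x)%E.
Proof.
move=> f0 fg; rewrite !ge0_integralE //; last first.
  by move=> x Dx; apply: le_trans (f0 x Dx) (fg x Dx).
apply: ereal_sup_le => _ [h hf <-]; exists h => //= x.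
apply: le_trans (hf x) _; rewrite /patch; case: ifP => // /[!inE] Dx.
exact: fg.
Qed.
Theorem lemma2p2 (R : realType) (d : nat) (Omega : set 'rV[R]_d)
  (leb : {measure set (Rd R d) -> \bar R})
  (mu : probability (Rd R d) R)
  (mustar : {finite_measure set (Rd R d) -> \bar R})
  (psi : 'rV[R]_d -> R) :
  (1 <= d)%N ->
  is_lebesgue leb ->
  compact Omega -> convex_set Omega -> lipschitz_boundary Omega ->
  (* mu is a probability measure on Omega *)
  mu (~` Omega) = 0%E ->
  (* condition (1) *)
  (exists C1 : R, 0 < C1 /\
     forall (x : 'rV[R]_d) (a : R), Omega x -> 0 < a <= 1 ->
       (C1%:E * leb (eball x a) <= mu (Omega `&` eball x a))%E) ->
  (* condition (2) *)
  (forall A : set (Rd R d), measurable A -> A `<=` Omega -> mustar A = mu A) ->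
  leb.-integrable setT (fun xi : Rd R d => (fourier_abs mustar xi)%:E) ->
  (* hypotheses on psi *)
  continuous psi ->
  (forall x, 0 <= psi x) ->
  (\int[leb]_(x in setT) (psi x)%:E = 1)%E ->
  (\int[leb]_(x in setT) (enorm x * psi x)%:E < +oo)%E ->
  (exists Cpsi : R, 0 < Cpsi /\ forall x, enorm x <= 1 -> Cpsi <= psi x) ->
  exists c : R, 0 < c /\
    forall h : R, 0 < h <= 1 -> forall x : 'rV[R]_d, Omega x ->
      ((1 / c)%:E <=
        \int[mu]_(t in Omega) (h ^- d * psi (h^-1 *: (x - t)))%:E)%E.
Proof.
move=> d1 leb_box cOm _ _ _ [C1 [C1pos HC1]] _ _ _ psi0 _ _ [Cpsi [Cpos HCpsi]].
have dpos : (0 < d%:R :> R) by rewrite ltr0n.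
have d1R : (1 <= d%:R :> R) by rewrite ler1n.
exists ((Cpsi * C1 * (d%:R^-1) ^+ d)^-1); split.
  by rewrite invr_gt0 mulr_gt0 ?mulr_gt0 // exprn_gt0 // invr_gt0.
move=> h /andP[h0 h1] x Ox; rewrite div1r invrK.
have mOm : measurable (Omega : set (Rd R d)).
  apply: closed_meas; apply: compact_closed => //; exact: norm_hausdorff.
have mB : measurable (eball x h : set (Rd R d)) by apply: open_meas; exact: eball_open.
set k := h ^- d * Cpsi.
have k0 : 0 < k by rewrite mulr_gt0 // invr_gt0 exprn_gt0.
set s := h / (2 * d%:R).
have s0 : 0 < s by rewrite divr_gt0 // mulr_gt0.
have sd : s * d%:R = h / 2 by rewrite /s; field; rewrite pnatr_eq0 -lt0n.
pose a : 'rV[R]_d := \row_i (x 0 i - s).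
pose b : 'rV[R]_d := \row_i (x 0 i + s).
have ab i : a 0 i <= b 0 i by rewrite !mxE; lra.
have mbox : measurable (box a b : set (Rd R d)) by apply: closed_meas; exact: box_closed.
have boxB : box a b `<=` eball x h.
  move=> y /= Hy; rewrite /enorm.
  have H1 : dotv (y - x) (y - x) <= (h / 2) ^+ 2.
    apply: (@le_trans _ _ (\sum_(i < d) s * s)).
      apply: ler_sum => i _; have /andP[] := Hy i; rewrite !mxE => l r.
      nra.
    rewrite sumr_const card_ord -mulr_natr; nra.
  apply: (le_lt_trans (ler_wsqrtr H1)); rewrite sqrtr_sqr ger0_norm; lra.
have volbox : leb (box a b) = ((h / d%:R) ^+ d)%:E.
  rewrite leb_box //; congr EFin.
  rewrite (eq_bigr (fun _ => h / d%:R)) ?prodr_const ?card_ord // => i _.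
  rewrite !mxE; rewrite /s; field; rewrite pnatr_eq0 -lt0n //.
apply: (@le_trans _ _ (k%:E * (C1%:E * leb (box a b)))%E).
  rewrite volbox -!EFinM lee_fin le_eqVlt; apply/orP; left; apply/eqP.
  rewrite /k expr_div_n exprVn; field.
  by rewrite !expf_neq0 // ?pnatr_eq0 -?lt0n // gt_eqF.
apply: (@le_trans _ _ (k%:E * (C1%:E * leb (eball x h)))%E).
  apply: lee_wpmul2l; first by rewrite lee_fin ltW.
  apply: lee_wpmul2l; first by rewrite lee_fin ltW.
  by apply: le_measure => //; rewrite inE.
apply: (@le_trans _ _ (k%:E * mu (eball x h `&` Omega))%E).
  apply: lee_wpmul2l; first by rewrite lee_fin ltW.
  by rewrite setIC; apply: HC1 => //; rewrite h0 h1.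
rewrite -integral_indic //.
rewrite -(integralZl_indic mOm (fun _ => eball x h)) //; last by move=> kn; have := lt_trans k0 kn; rewrite ltxx.
apply: ge0_le_integral_nm => t Ot.
  by rewrite lee_fin indicE mulr_ge0 // ltW.
rewrite lee_fin indicE; case: (boolP (t \in eball x h)) => [/[!inE] Bt|_]; last first.
  by rewrite mulr0 mulr_ge0 // ?invr_ge0 ?exprn_ge0 ?ltW.
rewrite mulr1 /k; apply: ler_wpM2l; first by rewrite invr_ge0 exprn_ge0 // ltW.
apply: HCpsi; rewrite enormZ -opprB enormN ger0_norm; last by rewrite invr_ge0 ltW.
rewrite -(mulVf (lt0r_neq0 h0)); apply: ler_wpM2l; first by rewrite invr_ge0 ltW.
exact: ltW.
Qed.
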